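(* Let $(x_n)_n$ be a block sequence in the unit ball $B_J$ of $J$ such that $\lim_nI_\infty^*(x_n)=\alpha\ne0$ and $\lim_n\|x_n\|=\beta\ge0$, and let $0<\epsilon<1$. Then there is a subsequence $(x_{n_k})_k$ such that for every finitely supported sequence of reals $(\lambda_k)$, $(1-\epsilon)|\alpha|\,\big\|\sum_k\lambda_ke_k\big\|\le\big\|\sum_k\lambda_kx_{n_k}\big\|\le3(1+\epsilon)(|\alpha|+\beta)\big\|\sum_k\lambda_ke_k\big\|$. Hence $(x_{n_k})_k$ is equivalent to the unit vector basis $(e_k)$ of $J$.
   Context: The James space $J$ is the space of real sequences $x=(x(n))_{n\in\mathbb N}$ with $\|x\|=\sup\big(\sum_{i=1}^m|\sum_{k\in I_i}x(k)|^2\big)^{1/2}<\infty$, the supremum taken over all $m$ and all pairwise disjoint finite intervals $I_1,\dots,I_m$ of $\mathbb N$. The unit vectors $(e_n)$ form a basis of $J$; a block sequence is a sequence of nonzero finitely supported vectors with $\max\operatorname{supp}x_n<\min\operatorname{supp}x_{n+1}$. $I_\infty^*\in J^*$ is the functional $I_\infty^*(x)=\sum_{n=1}^\infty x(n)$. *)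

(* Defs.v *)
From HB Require Import structures.
From mathcomp Require Import all_boot all_order all_algebra.
From mathcomp Require Import all_classical all_reals all_analysis.
Set Implicit Arguments. Unset Strict Implicit. Unset Printing Implicit Defensive.
Import Order.TTheory GRing.Theory Num.Theory numFieldNormedType.Exports.
Local Open Scope classical_set_scope.
Local Open Scope ring_scope.

Section James.
Variable R : realType.

(* A finite family of intervals [a,b] = {a,...,b} of N, given as pairs (a,b)
   with a <= b, pairwise disjoint. *)
Definition intervals_ok (s : seq (nat * nat)) : bool :=
  all (fun p => (p.1 <= p.2)%N) s &&
  pairwise (fun p q => (p.2 < q.1)%N || (q.2 < p.1)%N) s.

Definition jsumsq (x : nat -> R) (s : seq (nat * nat)) : R :=
  \sum_(p <- s) (\sum_(p.1 <= k < p.2.+1) x k) ^+ 2.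

Definition jset (x : nat -> R) : set R :=
  [set r | exists s, intervals_ok s /\ r = jsumsq x s].

Definition inJ (x : nat -> R) : Prop := has_ubound (jset x).

Definition jnorm (x : nat -> R) : R := Num.sqrt (sup (jset x)).

Definition Iinf (x : nat -> R) : R := limn (series (x : R^nat)).

Definition unitv (k : nat) : nat -> R := fun m => if m == k then 1 else 0.

Definition fin_supp (x : nat -> R) : Prop := exists N, forall m, (N <= m)%N -> x m = 0.

Definition block_seq (x : nat -> nat -> R) : Prop :=
  forall n, (exists m, x n m != 0) /\ fin_supp (x n) /\
    (forall i j, x n i != 0 -> x n.+1 j != 0 -> (i < j)%N).

Definition lincomb (N : nat) (lam : nat -> R) (y : nat -> nat -> R) : nat -> R :=
  fun m => \sum_(k < N) lam k * y k m.

End James.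

(* Main.v *)
Require Import Defs.
From HB Require Import structures.
From mathcomp Require Import all_boot all_order all_algebra.
From mathcomp Require Import all_classical all_reals all_analysis.
From mathcomp Require Import ring lra zify.
From Stdlib Require Import Lia.
Import Order.TTheory GRing.Theory Num.Theory numFieldNormedType.Exports.
Local Open Scope classical_set_scope.
Local Open Scope ring_scope.

Section Aux.
Context {R : realType}.

Lemma sumsq_le_sq (I : Type) (s : seq I) (t : I -> R) :
  (forall i, 0 <= t i) -> \sum_(i <- s) t i ^+ 2 <= (\sum_(i <- s) t i) ^+ 2.
Proof.
move=> t0; elim: s => [|i s IH]; first by rewrite !big_nil expr0n.
rewrite !big_cons.
have S0 : 0 <= \sum_(j <- s) t j by apply: sumr_ge0.
have := t0 i; nra.
Qed.

Lemma disj_sq (N : nat) (g : nat -> R) :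
  (forall k j, k != j -> g k * g j = 0) ->
  (\sum_(0 <= k < N) g k) ^+ 2 = \sum_(0 <= k < N) g k ^+ 2.
Proof.
move=> H; elim: N => [|N IH]; first by rewrite !big_geq // expr0n.
rewrite !big_nat_recr //= -IH.
have [gN|gN] := eqVneq (g N) 0.
  by rewrite gN addr0 expr0n /= addr0.
have -> : \sum_(0 <= k < N) g k = 0.
  rewrite big_nat_cond big1 // => k /andP[/andP[_ kN] _].
  have : g k * g N = 0 by apply: H; rewrite neq_ltn kN.
  by move/eqP; rewrite mulf_eq0 (negbTE gN) orbF => /eqP.
by rewrite add0r expr0n /= add0r.
Qed.

Definition disjP (p q : nat * nat) : bool := (p.2 < q.1)%N || (q.2 < p.1)%N.

Lemma atmost1 (s : seq (nat*nat)) (u v : nat -> nat) (c : nat -> R) M :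
  pairwise disjP s -> (forall k, (u k <= v k)%N) -> (forall k, 0 <= c k) ->
  \sum_(p <- s) \sum_(0 <= k < M) (if (p.1 <= u k)%N && (v k <= p.2)%N then c k else 0)
    <= \sum_(0 <= k < M) c k.
Proof.
move=> ps uv c0; rewrite exchange_big /=; apply: ler_sum => k _.
elim: s ps => [|p s IH]; first by rewrite big_nil.
rewrite pairwise_cons big_cons => /andP[ap ps].
case: ifP => Hp; last by rewrite add0r; exact: IH.
rewrite big1_seq ?addr0 // => q /andP[_ qs].
case: ifP => // /andP[q1 q2].
move/allP: ap => /(_ q qs); rewrite /disjP => /orP Hd.
case/andP: Hp => p1 p2; have := uv k.
case: Hd => H; lia.
Qed.

Definition Xs (y : nat -> R) (a b : nat) := \sum_(a <= m < b.+1) y m.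

Lemma Xs_ord (y : nat -> R) a b M : (forall m, (M <= m)%N -> y m = 0) ->
  Xs y a b = \sum_(0 <= m < M) (if (a <= m)%N && (m <= b)%N then y m else 0).
Proof.
move=> yM; rewrite /Xs.
pose K := maxn M b.+1.
have E1 : \sum_(0 <= m < M) (if (a <= m)%N && (m <= b)%N then y m else 0)
   = \sum_(0 <= m < K) (if (a <= m)%N && (m <= b)%N then y m else 0).
  rewrite [RHS](big_cat_nat _ (n:=M)) ?leq_maxl //=.
  rewrite [X in _ + X]big_nat_cond [X in _ + X]big1 ?addr0 // => m /andP[/andP[Mm _] _].
  by rewrite yM //; case: ifP.
rewrite E1 [RHS](big_cat_nat _ (n:=b.+1)) ?leq_maxr //=.
rewrite [X in _ + X]big_nat_cond [X in _ + X]big1 ?addr0; last first.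
  by move=> m /andP[/andP[bm _] _]; case: ifP => // /andP[_]; lia.
case: (leqP a b.+1) => ab.
  rewrite [RHS](big_cat_nat _ (n:=a)) //=.
  rewrite [X in X + _]big_nat_cond [X in X + _]big1 ?add0r; last first.
    by move=> m /andP[/andP[_ ma] _]; case: ifP => // /andP; lia.
  apply: eq_big_nat => m /andP[am mb]; rewrite am /=; by rewrite ltnS in mb; rewrite mb.
rewrite big_geq; last by lia.
rewrite big_nat_cond big1 // => m /andP[/andP[_ mb] _]; case: ifP => // /andP; lia.
Qed.


Lemma jsumsq_ge0 (y : nat -> R) s : 0 <= jsumsq y s.
Proof. by apply: sumr_ge0 => p _; apply: sqr_ge0. Qed.

Lemma jset_n0 (y : nat -> R) : jset y !=set0.
Proof. by exists 0; exists [::]; split => //; rewrite /jsumsq big_nil. Qed.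

Lemma jsumsq_le_sup (y : nat -> R) s : inJ y -> intervals_ok s -> jsumsq y s <= sup (jset y).
Proof.
move=> Hy Hs; have Hsup : has_sup (jset y) by split; [exact: jset_n0|exact: Hy].
by apply: (sup_upper_bound Hsup); exists s.
Qed.

Lemma sup_ge0 (y : nat -> R) : inJ y -> 0 <= sup (jset y).
Proof.
move=> Hy; apply: le_trans (@jsumsq_le_sup y [::] Hy _) => //.
exact: jsumsq_ge0.
Qed.

Lemma jnorm_sq (y : nat -> R) : inJ y -> jnorm y ^+ 2 = sup (jset y).
Proof. by move=> Hy; rewrite /jnorm sqr_sqrtr // sup_ge0. Qed.

Lemma sup_le (y : nat -> R) C :
  (forall s, intervals_ok s -> jsumsq y s <= C) -> sup (jset y) <= C.
Proof.
move=> H; apply: ge_sup; first exact: jset_n0.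
by move=> r [s [Hs ->]]; apply: H.
Qed.

Lemma le_sqrt (a Z : R) : 0 <= a -> 0 <= Z -> a ^+ 2 <= Z -> a <= Num.sqrt Z.
Proof.
move=> a0 Z0 H; have -> : a = Num.sqrt (a ^+ 2) by rewrite sqrtr_sqr ger0_norm.
by rewrite ler_sqrt.
Qed.

Lemma jsumsq_l1 (y : nat -> R) M s : (forall m, (M <= m)%N -> y m = 0) ->
  intervals_ok s -> jsumsq y s <= (\sum_(0 <= m < M) `|y m|) ^+ 2.
Proof.
move=> yM /andP[_ ps].
pose T (p : nat * nat) := \sum_(0 <= m < M) (if (p.1 <= m)%N && (m <= p.2)%N then `|y m| else 0).
have T0 p : 0 <= T p by apply: sumr_ge0 => m _; case: ifP.
apply: le_trans (_ : \sum_(p <- s) T p ^+ 2 <= _).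
  apply: ler_sum => p _; have := @Xs_ord y p.1 p.2 M yM; rewrite /Xs => ->.
  have H1 : `|\sum_(0 <= m < M) (if (p.1 <= m)%N && (m <= p.2)%N then y m else 0)| <= T p.
    apply: le_trans (ler_norm_sum _ _ _) _; apply: ler_sum => m _.
    by case: ifP => //; rewrite normr0.
  rewrite -real_normK ?num_real //.
  have := normr_ge0 (\sum_(0 <= m < M) (if (p.1 <= m)%N && (m <= p.2)%N then y m else 0)).
  nra.
apply: le_trans (sumsq_le_sq _ s _ T0) _.
have H := atmost1 s id id (fun m => `|y m|) M ps (fun k => leqnn k) (fun m => normr_ge0 (y m)).
have S0 : 0 <= \sum_(p <- s) T p by apply: sumr_ge0.
rewrite /T; move: H S0; rewrite /T; nra.
Qed.

Lemma inJ_fin (y : nat -> R) M : (forall m, (M <= m)%N -> y m = 0) -> inJ y.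
Proof.
move=> yM; exists ((\sum_(0 <= m < M) `|y m|) ^+ 2).
by move=> r [s [Hs ->]]; apply: jsumsq_l1.
Qed.

End Aux.
Lemma sum_delta (R : realType) (N m : nat) (c : nat -> R) :
  \sum_(0 <= k < N) (c k * (if m == k then 1 else 0)) = if (m < N)%N then c m else 0.
Proof.
elim: N => [|N IH]; first by rewrite big_geq.
rewrite big_nat_recr //= IH.
case: (ltngtP m N) => mN.
- by rewrite mulr0 addr0; case: ifP => //; lia.
- by rewrite mulr0 addr0; case: ifP => //; lia.
- by rewrite mN ltnSn mulr1 add0r.
Qed.

Lemma geom_sum (R : realType) (N : nat) :
  \sum_(0 <= k < N) ((2:R) ^+ k.+1)^-1 = 1 - ((2:R) ^+ N)^-1.
Proof.
elim: N => [|N IH]; first by rewrite big_geq // expr0 invr1 subrr.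
rewrite big_nat_recr //= IH exprS.
have h : (2:R) ^+ N != 0 by rewrite expf_neq0.
field; by rewrite h.
Qed.

Lemma find_up (P : pred nat) (N k : nat) :
  (forall i j, (i <= j)%N -> P i -> P j) -> (k < N)%N ->
  P k = (find P (iota 0 N) <= k)%N.
Proof.
move=> mono kN; case Pk: (P k); apply/esym.
  apply/idP; rewrite leqNgt; apply/negP => kf.
  by have := before_find 0 kf; rewrite nth_iota // add0n Pk.
apply/negbTE/negP => fk.
have hf : (find P (iota 0 N) < size (iota 0 N))%N by rewrite size_iota; lia.
move: hf; rewrite -has_find => /(nth_find 0).
rewrite nth_iota; last exact: leq_ltn_trans fk kN.
by rewrite add0n => /(mono _ _ fk); rewrite Pk.
Qed.

Lemma pairwise_map_filter (T U : eqType) (r : rel T) (r' : rel U) (f : T -> U) (P : pred T) s :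
  (forall x y, P x -> P y -> r x y -> r' (f x) (f y)) -> pairwise r s -> pairwise r' (map f [seq x <- s | P x]).
Proof.
move=> H; elim: s => [|x s IH] //= /andP[ax ps].
case: ifP => Px; last exact: IH.
rewrite /= IH // andbT; apply/allP => _ /mapP[w ws ->].
move: ws; rewrite mem_filter => /andP[Pw ws].
by apply: H => //; move/allP: ax; apply.
Qed.

Lemma cond_sq_le (R : realType) (s : seq (nat * nat)) (Pc : nat * nat -> nat -> bool) (c : nat -> R) M :
  (forall k, \sum_(p <- s) (if Pc p k then (1:R) else 0) <= 1) ->
  \sum_(p <- s) (\sum_(0 <= k < M) (if Pc p k then c k else 0)) ^+ 2
    <= (\sum_(0 <= k < M) `|c k|) ^+ 2.
Proof.
move=> H1.
pose T (p : nat * nat) := \sum_(0 <= k < M) (if Pc p k then `|c k| else 0).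
have T0 p : 0 <= T p by apply: sumr_ge0 => m _; case: ifP.
apply: le_trans (_ : \sum_(p <- s) T p ^+ 2 <= _).
  apply: ler_sum => p _.
  have H2 : `|\sum_(0 <= m < M) (if Pc p m then c m else 0)| <= T p.
    apply: le_trans (ler_norm_sum _ _ _) _; apply: ler_sum => m _.
    by case: ifP => //; rewrite normr0.
  rewrite -real_normK ?num_real //.
  have := normr_ge0 (\sum_(0 <= m < M) (if Pc p m then c m else 0)).
  nra.
apply: le_trans (sumsq_le_sq _ s _ T0) _.
have H : \sum_(p <- s) T p <= \sum_(0 <= k < M) `|c k|.
  rewrite /T exchange_big /=; apply: ler_sum => k _.
  have -> : \sum_(p <- s) (if Pc p k then `|c k| else 0) = `|c k| * \sum_(p <- s) (if Pc p k then 1 else 0).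
    by rewrite big_distrr /=; apply: eq_bigr => p _; case: ifP; rewrite ?mulr1 ?mulr0.
  have := H1 k; have := normr_ge0 (c k); nra.
have S0 : 0 <= \sum_(p <- s) T p by apply: sumr_ge0.
move: H S0; nra.
Qed.

Lemma atmost1' (R : realType) (s : seq (nat*nat)) (u v : nat -> nat) :
  pairwise disjP s -> (forall k, (u k <= v k)%N) -> forall k,
  \sum_(p <- s) (if (p.1 <= u k)%N && (v k <= p.2)%N then (1:R) else 0) <= 1.
Proof.
move=> ps uv k.
elim: s ps => [|p s IH]; first by rewrite big_nil.
rewrite pairwise_cons big_cons => /andP[ap ps].
case: ifP => Hp; last by rewrite add0r; exact: IH.
rewrite big1_seq ?addr0 // => q /andP[_ qs].
case: ifP => // /andP[q1 q2].
move/allP: ap => /(_ q qs); rewrite /disjP => /orP Hd.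
case/andP: Hp => p1 p2; have := uv k.
case: Hd => H; lia.
Qed.

Section Main.
Variables (R : realType) (y : nat -> nat -> R) (a b : nat -> nat) (al bt dl : R) (N : nat) (lam : nat -> R).
Hypothesis Hab : forall k, (a k <= b k)%N.
Hypothesis Hba : forall k, (b k < a k.+1)%N.
Hypothesis Hsupp : forall k m, ~~ ((a k <= m)%N && (m <= b k)%N) -> y k m = 0.
Hypothesis HJ : forall k, inJ (y k).
Hypothesis Hnorm : forall k, jnorm (y k) <= bt + dl.
Hypothesis Hdl : 0 <= dl.
Hypothesis Hd : forall k, `|Xs (y k) (a k) (b k) - al| <= dl * ((2:R) ^+ k.+1)^-1.
Hypothesis Hlam : forall k, (N <= k)%N -> lam k = 0.

Let d_ k := Xs (y k) (a k) (b k) - al.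
Let e := lincomb N lam (@unitv R).
Let z := lincomb N lam y.
Let E := sup (jset e).
Let Z := sup (jset z).

Lemma ba_lt k j : (k < j)%N -> (b k < a j)%N.
Proof.
elim: j => [//|j IH]; rewrite ltnS leq_eqVlt => /orP[/eqP->//|kj].
have := IH kj; have := Hab j; have := Hba j; lia.
Qed.

Lemma a_mono k j : (k <= j)%N -> (a k <= a j)%N.
Proof.
rewrite leq_eqVlt => /orP[/eqP->//|kj]; have := ba_lt _ _ kj; have := Hab k; lia.
Qed.

Lemma b_mono k j : (k <= j)%N -> (b k <= b j)%N.
Proof.
rewrite leq_eqVlt => /orP[/eqP->//|kj]; have := ba_lt _ _ kj; have := Hab j; lia.
Qed.

Lemma e_eq m : e m = lam m.
Proof.
rewrite /e /lincomb /unitv.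
rewrite -(big_mkord xpredT (fun i => lam i * (if m == i then 1 else 0))) sum_delta.
by case: ifP => // /negbT; rewrite -leqNgt => /Hlam ->.
Qed.

Lemma z_eq m : z m = \sum_(0 <= k < N) lam k * y k m.
Proof. by rewrite /z /lincomb big_mkord. Qed.

Lemma e_tail m : (N <= m)%N -> e m = 0.
Proof. by move=> Nm; rewrite e_eq Hlam. Qed.

Lemma z_tail m : (b N <= m)%N -> z m = 0.
Proof.
move=> bm; rewrite z_eq big_nat_cond big1 // => k /andP[/andP[_ kN] _].
rewrite Hsupp ?mulr0 //; have := ba_lt _ _ kN; have := Hab N; lia.
Qed.

Lemma inJe : inJ e. Proof. exact: (inJ_fin _ _ e_tail). Qed.
Lemma inJz : inJ z. Proof. exact: (inJ_fin _ _ z_tail). Qed.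

Lemma E0 : 0 <= E. Proof. exact: sup_ge0 _ inJe. Qed.
Lemma Z0 : 0 <= Z. Proof. exact: sup_ge0 _ inJz. Qed.

Lemma Xs_z c d : Xs z c d = \sum_(0 <= k < N) lam k * Xs (y k) c d.
Proof.
rewrite /Xs; under eq_bigr do rewrite z_eq.
rewrite exchange_big /=; apply: eq_bigr => k _; by rewrite big_distrr.
Qed.

Lemma Xs_e c d : Xs e c d = Xs lam c d.
Proof. by apply: eq_bigr => m _; rewrite e_eq. Qed.

Lemma y_tail k m : ((b k).+1 <= m)%N -> y k m = 0.
Proof. by move=> bm; apply: Hsupp; lia. Qed.

Lemma Xs_full k c d : (c <= a k)%N -> (b k <= d)%N -> Xs (y k) c d = Xs (y k) (a k) (b k).
Proof.
move=> ca bd; rewrite (Xs_ord _ _ _ _ (y_tail k)) (Xs_ord _ _ _ _ (y_tail k)).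
apply: eq_big_nat => m /andP[_ mb]; case: (leqP (a k) m) => am.
  have -> : (c <= m)%N by lia.
  have -> : (m <= d)%N by lia.
  by have -> : (m <= b k)%N by lia.
by rewrite Hsupp ?if_same //; lia.
Qed.

Lemma Xs_out k c d : (d < a k)%N || (b k < c)%N -> Xs (y k) c d = 0.
Proof.
move=> H; rewrite /Xs big_nat_cond big1 // => m /andP[/andP[cm md] _].
by apply: Hsupp; lia.
Qed.

Lemma lam_sq k : lam k ^+ 2 <= E.
Proof.
have := jsumsq_le_sup _ [:: (k, k)] inJe.
rewrite /jsumsq big_cons big_nil addr0 -/(Xs e k k) Xs_e /Xs big_nat1; apply.
by rewrite /intervals_ok /= leqnn.
Qed.

Lemma lam_abs k : `|lam k| <= Num.sqrt E.
Proof.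
apply: le_sqrt => //; [exact: E0|]; by rewrite real_normK ?num_real // lam_sq.
Qed.

Lemma sumsq_lam : \sum_(0 <= k < N) lam k ^+ 2 <= E.
Proof.
pose s1 := [seq (k, k) | k <- index_iota 0 N].
have ok : intervals_ok s1.
  apply/andP; split; first by rewrite all_map; apply/allP => k _ /=.
  rewrite pairwise_map; apply: (@sub_in_pairwise _ xpredT ltn); last first.
  - by rewrite -sorted_pairwise /index_iota ?subn0; [exact: iota_ltn_sorted | exact: ltn_trans].
  - by apply/allP.
  by move=> i j _ _ /= ->.
have -> : \sum_(0 <= k < N) lam k ^+ 2 = jsumsq e s1.
  rewrite /jsumsq big_map; apply: eq_bigr => k _.
  by rewrite -/(Xs e k k) Xs_e /Xs big_nat1.
exact: jsumsq_le_sup _ s1 inJe ok.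
Qed.

Lemma sum_d : \sum_(0 <= k < N) `|d_ k| <= dl.
Proof.
apply: le_trans (_ : \sum_(0 <= k < N) dl * ((2:R) ^+ k.+1)^-1 <= _).
  by apply: ler_sum => k _; exact: Hd.
rewrite -big_distrr geom_sum /=.
have h : 0 <= ((2:R) ^+ N)^-1 by rewrite invr_ge0 exprn_ge0.
have := mulr_ge0 Hdl h; lra.
Qed.

Lemma lamd_bound : (\sum_(0 <= k < N) `|lam k * d_ k|) ^+ 2 <= E * dl ^+ 2.
Proof.
have S0 : 0 <= \sum_(0 <= k < N) `|lam k * d_ k| by apply: sumr_ge0.
have H : \sum_(0 <= k < N) `|lam k * d_ k| <= Num.sqrt E * dl.
  apply: le_trans (_ : \sum_(0 <= k < N) Num.sqrt E * `|d_ k| <= _).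
    apply: ler_sum => k _; rewrite normrM; apply: ler_wpM2r => //; exact: lam_abs.
  rewrite -big_distrr /=; apply: ler_wpM2l; [exact: sqrtr_ge0|exact: sum_d].
have -> : E * dl ^+ 2 = (Num.sqrt E * dl) ^+ 2 by rewrite exprMn sqr_sqrtr //; exact: E0.
have := sqrtr_ge0 E; nra.
Qed.

Lemma Dsum (s : seq (nat * nat)) (Pc : nat * nat -> nat -> bool) :
  (forall k, \sum_(p <- s) (if Pc p k then (1:R) else 0) <= 1) ->
  \sum_(p <- s) (\sum_(0 <= k < N) (if Pc p k then lam k * d_ k else 0)) ^+ 2 <= E * dl ^+ 2.
Proof. by move=> H; apply: le_trans (cond_sq_le _ _ _ _ _ H) lamd_bound. Qed.

Lemma lower_s eps s : 0 < eps -> intervals_ok s ->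
  eps * al ^+ 2 * jsumsq e s <= eps * (1 + eps) * Z + (1 + eps) * (E * dl ^+ 2).
Proof.
move=> ep Hs; have Hs' := Hs; case/andP: Hs' => als ps.
pose s2 := [seq (a p.1, b p.2) | p <- s].
have ok2 : intervals_ok s2.
  apply/andP; split.
    rewrite all_map; apply/allP => p ps' /=; have := allP als p ps' => /= H12.
    exact: leq_trans (a_mono _ _ H12) (Hab p.2).
  rewrite pairwise_map; apply: (@sub_in_pairwise _ xpredT (fun p q => (p.2 < q.1)%N || (q.2 < p.1)%N)) => //; last by apply/allP.
  move=> p q _ _ /= /orP[H|H]; apply/orP; [left|right]; exact: ba_lt.
pose D (p : nat * nat) := \sum_(0 <= k < N) (if (p.1 <= k)%N && (k <= p.2)%N then lam k * d_ k else 0).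
have key p : Xs z (a p.1) (b p.2) = al * Xs lam p.1 p.2 + D p.
  rewrite Xs_z (Xs_ord _ _ _ _ Hlam) big_distrr -big_split /=.
  apply: eq_big_nat => k _; case: ifP => /andP H.
    case: H => H1 H2; rewrite (Xs_full k); first by rewrite /d_; ring.
      exact: a_mono.
    exact: b_mono.
  rewrite Xs_out ?mulr0 ?addr0 //.
  case: (leqP p.1 k) => H1.
    have H2 : (p.2 < k)%N by case: (leqP k p.2) => // ?; case: H.
    by rewrite (ba_lt _ _ H2).
  by rewrite (ba_lt _ _ H1) orbT.
have step p : eps * al ^+ 2 * (Xs lam p.1 p.2) ^+ 2 <=
    eps * (1 + eps) * (Xs z (a p.1) (b p.2)) ^+ 2 + (1 + eps) * (D p) ^+ 2.
  rewrite key -subr_ge0.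
  have -> : eps * (1 + eps) * (al * Xs lam p.1 p.2 + D p) ^+ 2 + (1 + eps) * D p ^+ 2 -
      eps * al ^+ 2 * Xs lam p.1 p.2 ^+ 2 = (eps * (al * Xs lam p.1 p.2 + D p) + D p) ^+ 2 by ring.
  exact: sqr_ge0.
have H1 : eps * al ^+ 2 * jsumsq e s <=
    eps * (1 + eps) * jsumsq z s2 + (1 + eps) * \sum_(p <- s) D p ^+ 2.
  rewrite /jsumsq big_map !big_distrr -big_split /=; apply: ler_sum => p _.
  by rewrite -/(Xs e p.1 p.2) Xs_e -/(Xs z (a p.1) (b p.2)).
have H2 := jsumsq_le_sup _ s2 inJz ok2.
have H3 : \sum_(p <- s) D p ^+ 2 <= E * dl ^+ 2.
  apply: Dsum; exact: (atmost1' _ _ id id ps (fun k => leqnn k)).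
apply: le_trans H1 _; apply: lerD.
  by apply: ler_wpM2l => //; apply: mulr_ge0; lra.
by apply: ler_wpM2l => //; lra.
Qed.

Lemma lower eps : 0 < eps -> al != 0 ->
  eps * al ^+ 2 * E <= eps * (1 + eps) * Z + (1 + eps) * (E * dl ^+ 2).
Proof.
move=> ep al0.
have p0 : 0 < eps * al ^+ 2 by apply: mulr_gt0 => //; rewrite exprn_even_gt0.
have : E <= (eps * (1 + eps) * Z + (1 + eps) * (E * dl ^+ 2)) / (eps * al ^+ 2).
  apply: sup_le => s Hs; rewrite ler_pdivlMr // mulrC; exact: lower_s.
by rewrite ler_pdivlMr // mulrC.
Qed.

Let pf c := find (fun k => (c <= a k)%N) (iota 0 N).
Let qf d := find (fun k => (d < b k)%N) (iota 0 N).

Lemma pf_iff c k : (k < N)%N -> (c <= a k)%N = (pf c <= k)%N.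
Proof.
apply: find_up => i j ij ci; exact: leq_trans ci (a_mono _ _ ij).
Qed.

Lemma qf_iff d k : (k < N)%N -> (b k <= d)%N = (k < qf d)%N.
Proof.
move=> kN; rewrite leqNgt [RHS]ltnNge; congr negb; apply: find_up kN => i j ij di.
exact: leq_trans di (b_mono _ _ ij).
Qed.

Lemma qf_le d : (qf d <= N)%N.
Proof. by have := find_size (fun k => (d < b k)%N) (iota 0 N); rewrite size_iota. Qed.

Lemma sep c d : (d < c)%N -> (0 < qf d)%N -> ((qf d).-1 < pf c)%N.
Proof.
move=> dc q0; have kN : ((qf d).-1 < N)%N by have := qf_le d; lia.
have hk : (b (qf d).-1 <= d)%N by rewrite qf_iff //; lia.
rewrite ltnNge; apply/negP => H; move: H; rewrite -pf_iff // => H.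
have h3 := Hab (qf d).-1; lia.
Qed.

Lemma upper_s s : intervals_ok s ->
  jsumsq z s <= 4 * (al ^+ 2 * E + E * dl ^+ 2 + E * (bt + dl) ^+ 2).
Proof.
move=> Hs; have Hs' := Hs; case/andP: Hs' => als ps.
pose full (p : nat * nat) k := (p.1 <= a k)%N && (b k <= p.2)%N.
pose Sf p := \sum_(0 <= k < N) (if full p k then lam k else 0).
pose Df p := \sum_(0 <= k < N) (if full p k then lam k * d_ k else 0).
pose r p k := if full p k then 0 else Xs (y k) p.1 p.2.
pose Rr p := \sum_(0 <= k < N) lam k * r p k.
have dec p : Xs z p.1 p.2 = al * Sf p + Df p + Rr p.
  rewrite Xs_z /Sf /Df /Rr big_distrr -!big_split /=; apply: eq_bigr => k _.
  rewrite /r; case: ifP => /andP H.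
    case: H => H1 H2; rewrite (Xs_full k) //; rewrite /d_; ring.
  by rewrite mulr0 !add0r.
have Rbound p : Rr p ^+ 2 <= 2 * \sum_(0 <= k < N) (lam k * r p k) ^+ 2.
  pose L k := (a k < p.1)%N && (p.1 <= b k)%N.
  pose gl k := if L k then lam k * r p k else 0.
  pose gr k := if L k then 0 else lam k * r p k.
  have eR : Rr p = \sum_(0 <= k < N) gl k + \sum_(0 <= k < N) gr k.
    rewrite -big_split /=; apply: eq_bigr => k _; rewrite /gl /gr; case: ifP => _.
      by rewrite addr0.
    by rewrite add0r.
  have hl : (\sum_(0 <= k < N) gl k) ^+ 2 = \sum_(0 <= k < N) gl k ^+ 2.
    apply: disj_sq => k j kj; rewrite /gl.
    case Lk: (L k); case Lj: (L j); rewrite ?mul0r ?mulr0 //.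
    exfalso; move: Lk Lj; rewrite /L => /andP[h1 h2] /andP[h3 h4].
    move: kj; rewrite neq_ltn => /orP[H|H].
      have h5 := ba_lt _ _ H; lia.
    have h5 := ba_lt _ _ H; lia.
  have grc k : gr k != 0 -> (a k <= p.2)%N && (p.2 < b k)%N.
    rewrite /gr; case Lk: (L k); first by rewrite eqxx.
    rewrite /r; case fk: (full p k); first by rewrite mulr0 eqxx.
    move=> H.
    case: (leqP (a k) p.2) => h1; last by move: H; rewrite Xs_out ?h1 // mulr0 eqxx.
    case: (leqP p.1 (b k)) => h2; last by move: H; rewrite Xs_out ?h2 ?orbT // mulr0 eqxx.
    move: Lk fk; rewrite /L /full h2 andbT => /negbT; rewrite -leqNgt => h3.
    by rewrite h3 /= => /negbT; rewrite -ltnNge.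
  have hr : (\sum_(0 <= k < N) gr k) ^+ 2 = \sum_(0 <= k < N) gr k ^+ 2.
    apply: disj_sq => k j kj.
    case: (eqVneq (gr k) 0) => [->|gk]; first by rewrite mul0r.
    case: (eqVneq (gr j) 0) => [->|gj]; first by rewrite mulr0.
    exfalso; move: (grc _ gk) (grc _ gj) => /andP[h1 h2] /andP[h3 h4].
    move: kj; rewrite neq_ltn => /orP[H|H].
      have h5 := ba_lt _ _ H; have h6 := Hab k; lia.
    have h5 := ba_lt _ _ H; have h6 := Hab j; lia.
  have eq2 : \sum_(0 <= k < N) (lam k * r p k) ^+ 2 =
      \sum_(0 <= k < N) gl k ^+ 2 + \sum_(0 <= k < N) gr k ^+ 2.
    rewrite -big_split /=; apply: eq_bigr => k _; rewrite /gl /gr; case: ifP => _.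
      by rewrite expr0n addr0.
    by rewrite expr0n add0r.
  rewrite eR eq2 -hl -hr.
  have := sqr_ge0 (\sum_(0 <= k < N) gl k - \sum_(0 <= k < N) gr k); nra.
have Dfam : \sum_(p <- s) Df p ^+ 2 <= E * dl ^+ 2.
  by apply: Dsum; exact: (atmost1' _ _ a b ps Hab).
have Rfam : \sum_(p <- s) \sum_(0 <= k < N) (lam k * r p k) ^+ 2 <= E * (bt + dl) ^+ 2.
  rewrite exchange_big /=.
  apply: le_trans (_ : \sum_(0 <= k < N) lam k ^+ 2 * (bt + dl) ^+ 2 <= _); last first.
    rewrite -big_distrl /=; apply: ler_wpM2r; [exact: sqr_ge0|exact: sumsq_lam].
  apply: ler_sum => k _.
  under eq_bigr do rewrite exprMn.
  rewrite -big_distrr /=; apply: ler_wpM2l; first exact: sqr_ge0.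
  apply: le_trans (_ : jsumsq (y k) s <= _).
    apply: ler_sum => p _; rewrite /r; case: ifP => _; last by [].
    by rewrite expr0n; apply: sqr_ge0.
  apply: le_trans (jsumsq_le_sup _ _ (HJ k) Hs) _.
  rewrite -jnorm_sq //; have := Hnorm k; have := sqrtr_ge0 (sup (jset (y k))).
  rewrite /jnorm => h1 h2; nra.
have Sfam : \sum_(p <- s) Sf p ^+ 2 <= E.
  pose P (p : nat * nat) := (pf p.1 < qf p.2)%N.
  have fullE p k : (k < N)%N -> full p k = (pf p.1 <= k)%N && (k < qf p.2)%N.
    by move=> kN; rewrite /full pf_iff // qf_iff.
  have SfE p : Sf p = if P p then Xs lam (pf p.1) (qf p.2).-1 else 0.
    rewrite /P; case: ifP => Pp.
      rewrite /Sf (Xs_ord _ _ _ _ Hlam); apply: eq_big_nat => k /andP[_ kN].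
      rewrite fullE //; congr (if _ then _ else _); congr andb; lia.
    rewrite /Sf big_nat_cond big1 // => k /andP[/andP[_ kN] _].
    rewrite fullE //; case: ifP => // /andP[h1 h2]; move/negbT: Pp; lia.
  pose s3 := [seq (pf p.1, (qf p.2).-1) | p <- [seq p <- s | P p]].
  have ok3 : intervals_ok s3.
    apply/andP; split.
      rewrite all_map all_filter; apply/allP => p _ /=; apply/implyP; rewrite /P; lia.
    apply: pairwise_map_filter ps => p q Pp Pq /orP[H|H] /=; apply/orP; [left|right].
      by apply: sep => //; move: Pp; rewrite /P; lia.
    by apply: sep => //; move: Pq; rewrite /P; lia.
  have -> : \sum_(p <- s) Sf p ^+ 2 = jsumsq e s3.
    rewrite /jsumsq big_map big_filter [RHS]big_mkcond /=; apply: eq_bigr => p _.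
    rewrite SfE; case: ifP => _; last by rewrite expr0n.
    by rewrite -/(Xs e _ _) Xs_e.
  exact: jsumsq_le_sup _ _ inJe ok3.
have step p : Xs z p.1 p.2 ^+ 2 <= 4 * al ^+ 2 * Sf p ^+ 2 + 4 * Df p ^+ 2 +
    4 * \sum_(0 <= k < N) (lam k * r p k) ^+ 2.
  rewrite dec; have := Rbound p.
  have := sqr_ge0 (al * Sf p + Df p - Rr p); have := sqr_ge0 (al * Sf p - Df p); nra.
apply: le_trans (_ : \sum_(p <- s) (4 * al ^+ 2 * Sf p ^+ 2 + 4 * Df p ^+ 2 +
    4 * \sum_(0 <= k < N) (lam k * r p k) ^+ 2) <= _).
  by apply: ler_sum => p _; exact: step.
rewrite !big_split /= -!big_distrr /=.
have := sqr_ge0 al; nra.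
Qed.

Lemma upper : Z <= 4 * (al ^+ 2 * E + E * dl ^+ 2 + E * (bt + dl) ^+ 2).
Proof. by apply: sup_le => s Hs; exact: upper_s. Qed.

Lemma final eps : 0 < eps < 1 -> al != 0 -> 0 <= bt -> dl = eps * `|al| / 4 ->
  (1 - eps) * `|al| * jnorm e <= jnorm z /\
  jnorm z <= 3 * (1 + eps) * (`|al| + bt) * jnorm e.
Proof.
move=> /andP[e0 e1] al0 bt0 dlE.
have HE := E0; have HZ := Z0.
have Hal2 : al ^+ 2 = `|al| ^+ 2 by rewrite real_normK ?num_real.
have w0 : 0 <= `|al| := normr_ge0 al.
set w := `|al| in w0 Hal2 dlE.
have u0 : 0 <= w ^+ 2 * E by apply: mulr_ge0 => //; exact: sqr_ge0.
split.
  have L := lower eps e0 al0.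
  rewrite Hal2 dlE in L.
  have L2 : w ^+ 2 * E * (1 - (1 + eps) * eps / 16) <= (1 + eps) * Z.
    have : eps * (w ^+ 2 * E * (1 - (1 + eps) * eps / 16)) <= eps * ((1 + eps) * Z).
      have -> : eps * (w ^+ 2 * E * (1 - (1 + eps) * eps / 16)) =
         eps * w ^+ 2 * E - (1 + eps) * (E * (eps * w / 4) ^+ 2) by field.
      move: L; lra.
    by rewrite ler_pM2l.
  have L3 : (1 + eps) * (1 - eps) ^+ 2 <= 1 - (1 + eps) * eps / 16 by nra.
  have L4 : (1 + eps) * ((1 - eps) ^+ 2 * (w ^+ 2 * E)) <= (1 + eps) * Z.
    apply: le_trans L2; rewrite mulrA [X in _ <= X]mulrC; apply: ler_wpM2r => //.
  have L5 : (1 - eps) ^+ 2 * (w ^+ 2 * E) <= Z by move: L4; rewrite ler_pM2l //; lra.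
  rewrite /jnorm -/E -/Z; apply: le_sqrt => //.
    have h1 : 0 <= 1 - eps by lra.
    exact: mulr_ge0 (mulr_ge0 h1 w0) (sqrtr_ge0 E).
  rewrite !exprMn sqr_sqrtr //.
  by rewrite -mulrA; exact: L5.
have U := upper.
have C0 : 0 <= 3 * (1 + eps) * (w + bt) by apply: mulr_ge0; lra.
have U2 : Z <= (3 * (1 + eps) * (w + bt)) ^+ 2 * E.
  apply: le_trans U _; rewrite Hal2 dlE.
  have h1 : 4 * (w ^+ 2 + (eps * w / 4) ^+ 2 + (bt + eps * w / 4) ^+ 2) <= (3 * (1 + eps) * (w + bt)) ^+ 2.
    have h2 : eps * w <= w by nra.
    have h3 : 0 <= eps * w by nra.
    set t := eps * w / 4.
    have t0 : 0 <= t by rewrite /t; lra.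
    have t1 : t <= w / 4 by rewrite /t; lra.
    have s1 : w ^+ 2 + t ^+ 2 + (bt + t) ^+ 2 <= (w + bt + 2 * t) ^+ 2.
      have := mulr_ge0 w0 bt0; have := mulr_ge0 w0 t0; have := mulr_ge0 bt0 t0; nra.
    have s2 : (w + bt + 2 * t) ^+ 2 <= (3 / 2 * (w + bt)) ^+ 2.
      have q1 : 0 <= w + bt + 2 * t by lra.
      have q2 : w + bt + 2 * t <= 3 / 2 * (w + bt) by lra.
      nra.
    have s3 : 4 * (3 / 2 * (w + bt)) ^+ 2 <= (3 * (1 + eps) * (w + bt)) ^+ 2.
      have q1 : 0 <= w + bt by lra.
      have q2 : 3 * (w + bt) <= 3 * (1 + eps) * (w + bt) by nra.
      nra.
    lra.
  have -> : 4 * (w ^+ 2 * E + E * (eps * w / 4) ^+ 2 + E * (bt + eps * w / 4) ^+ 2) =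
    4 * (w ^+ 2 + (eps * w / 4) ^+ 2 + (bt + eps * w / 4) ^+ 2) * E by ring.
  by apply: ler_wpM2r.
rewrite /jnorm -/E -/Z.
apply: le_trans (_ : Num.sqrt ((3 * (1 + eps) * (w + bt)) ^+ 2 * E) <= _).
  by rewrite ler_sqrt //; apply: mulr_ge0 => //; exact: sqr_ge0.
by rewrite sqrtrM ?sqr_ge0 // sqrtr_sqr ger0_norm.
Qed.

End Main.

Lemma lim_ev (R : realType) (u : nat -> R) (l : R) N :
  (forall n, (N <= n)%N -> u n = l) -> limn u = l.
Proof.
move=> H; apply: cvg_lim => //; apply: cvg_near_cst; exists N => // n /= hn; exact: H.
Qed.

Lemma cvg_ev (R : realType) (u : nat -> R) (l : R) : u @ \oo --> l ->
  forall e, 0 < e -> exists N, forall n, (N <= n)%N -> `|l - u n| <= e.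
Proof.
move=> H e e0; move/cvgrPdist_le: H => /(_ e e0).
case=> N _ HN; exists N => n hn; exact: HN.
Qed.

Lemma blk_ex (R : realType) (x : nat -> nat -> R) : block_seq x -> forall n, exists ab : nat * nat,
  [/\ (ab.1 <= ab.2)%N, (forall m, x n m != 0 -> (ab.1 <= m)%N && (m <= ab.2)%N),
      x n ab.1 != 0 & x n ab.2 != 0].
Proof.
move=> Hb n; case: (Hb n) => [[m0 hm0] [[M HM] _]].
have ex : exists m, x n m != 0 by exists m0.
have ub : forall m, x n m != 0 -> (m <= M)%N.
  move=> m hm; rewrite leqNgt; apply/negP => /ltnW /HM hz.
  by rewrite hz eqxx in hm.
case: (ex_minnP ex) => a ha amin.
case: (ex_maxnP ex ub) => b hb bmax.
exists (a, b); split => //=; first exact: amin.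
by move=> m hm; rewrite amin ?bmax.
Qed.

Fixpoint mkphi (g : nat -> nat) (k : nat) : nat :=
  match k with 0 => g 0 | k'.+1 => maxn (mkphi g k').+1 (g k) end.

Lemma mkphi_ge g k : (g k <= mkphi g k)%N.
Proof. by case: k => [|k] //=; rewrite leq_maxr. Qed.

Lemma mkphi_inc g k : (mkphi g k < mkphi g k.+1)%N.
Proof. by rewrite /= leq_maxl. Qed.

Lemma mkphi_lt g k j : (k < j)%N -> (mkphi g k < mkphi g j)%N.
Proof.
elim: j => [//|j IH]; rewrite ltnS leq_eqVlt => /orP[/eqP->|kj]; first exact: mkphi_inc.
exact: ltn_trans (IH kj) (mkphi_inc g j).
Qed.

Theorem mainTheorem13 (R : realType) (x : nat -> nat -> R) (alpha beta eps : R) :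
  block_seq x ->
  (forall n, inJ (x n) /\ jnorm (x n) <= 1) ->
  (fun n => Iinf (x n)) @ \oo --> alpha -> alpha != 0 ->
  (fun n => jnorm (x n)) @ \oo --> beta -> 0 <= beta ->
  0 < eps < 1 ->
  exists phi : nat -> nat, (forall k, (phi k < phi k.+1)%N) /\
    forall (N : nat) (lam : nat -> R), (forall k, (N <= k)%N -> lam k = 0) ->
      (1 - eps) * `|alpha| * jnorm (lincomb N lam (@unitv R))
        <= jnorm (lincomb N lam (fun k => x (phi k))) /\
      jnorm (lincomb N lam (fun k => x (phi k)))
        <= 3 * (1 + eps) * (`|alpha| + beta) * jnorm (lincomb N lam (@unitv R)).
Proof.
move=> Hb Hn Ha al0 Hbeta b0 epsc; have epsc' := epsc; case/andP: epsc' => e0 e1.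
case: (choice (blk_ex _ _ Hb)) => f Hf.
pose A n := (f n).1; pose B n := (f n).2.
have AB n : (A n <= B n)%N by case: (Hf n).
have BA n : (B n < A n.+1)%N.
  case: (Hf n) => _ _ _ h1; case: (Hf n.+1) => _ _ h2 _.
  by case: (Hb n) => _ [_ H]; exact: H h1 h2.
have BAlt n j : (n < j)%N -> (B n < A j)%N.
  elim: j => [//|j IH]; rewrite ltnS leq_eqVlt => /orP[/eqP->|nj]; first exact: BA.
  have := IH nj; have := AB j; have := BA j; lia.
have supp n m : ~~ ((A n <= m)%N && (m <= B n)%N) -> x n m = 0.
  move=> h; apply/eqP; apply: contraNT h; case: (Hf n) => _ H _ _; exact: H.
have Iinf_eq n : Iinf (x n) = Xs (x n) (A n) (B n).
  rewrite /Iinf; apply: (lim_ev _ _ _ (B n).+1) => m hm.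
  rewrite seriesEnat /=.
  have -> : \sum_(0 <= k < m) x n k = Xs (x n) 0 m.-1 by rewrite /Xs prednK //; lia.
  have tl : forall k, ((B n).+1 <= k)%N -> x n k = 0 by move=> k hk; apply: supp; lia.
  rewrite (Xs_ord _ _ _ _ tl) (Xs_ord _ _ _ _ tl).
  apply: eq_big_nat => k /andP[_ kb]; case: (leqP (A n) k) => ak /=.
    have -> : (k <= m.-1)%N by lia.
    by have -> : (k <= B n)%N by lia.
  by rewrite supp ?if_same //; lia.
pose delta := eps * `|alpha| / 4.
have d0 : 0 < delta by rewrite /delta; apply: divr_gt0 => //; apply: mulr_gt0 => //; rewrite normr_gt0.
have conv k : exists Nk, forall n, (Nk <= n)%N ->
    `|Iinf (x n) - alpha| <= delta / (2:R) ^+ k.+1 /\ jnorm (x n) <= beta + delta.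
  have p1 : 0 < delta / (2:R) ^+ k.+1 by apply: divr_gt0 => //; apply: exprn_gt0.
  case: (cvg_ev _ _ _ Ha _ p1) => N1 H1; case: (cvg_ev _ _ _ Hbeta _ d0) => N2 H2.
  exists (maxn N1 N2) => n hn; split.
    by rewrite distrC; apply: H1; apply: leq_trans hn; exact: leq_maxl.
  have := H2 n (leq_trans (leq_maxr N1 N2) hn).
  have := ler_norm (beta - jnorm (x n)); rewrite -normrN opprB => h h'.
  have := ler_normlW h'; lra.
case: (choice conv) => g Hg.
exists (mkphi g); split; first exact: mkphi_inc.
move=> N lam Hlam.
apply: (@final R (fun k => x (mkphi g k)) (fun k => A (mkphi g k)) (fun k => B (mkphi g k))
  alpha beta delta N lam) => //.
- by move=> k; apply: BAlt; exact: mkphi_inc.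
- by move=> k m; exact: supp.
- by move=> k; exact: (Hn _).1.
- by move=> k; exact: (Hg k _ (mkphi_ge g k)).2.
- exact: ltW.
- by move=> k; rewrite -Iinf_eq; exact: (Hg k _ (mkphi_ge g k)).1.
Qed.
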